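(* Let $p>1$ and $0\le a<p-1$. For every integer $n\ge 2$, $$\bigl(n^p-(n-1)^p-n^a\bigr)\,T_{n-1}(p-a)\;\ge\; n^a\, S_{n-1}(p-a),$$ where $T_m(q)=\sum_{k=m+1}^{\infty}k^{-q}$ and $S_m(q)=\sum_{k=1}^{m}k^{-q}$.
   Context: For $q>1$ and an integer $m\ge 1$: $T_m(q)=\sum_{k=m+1}^\infty k^{-q}$ and $S_m(q)=\sum_{k=1}^m k^{-q}$. *)

(* Defs.v *)
From Stdlib Require Import Reals.
From Coquelicot Require Import Coquelicot.
Open Scope R_scope.

Definition powm (k : nat) (q : R) : R := Rpower (INR k) (- q).

(* T_m(q) = sum_{k = m+1}^oo k^(-q)   (Coquelicot's Series; the series
   converges for q > 1, where it is used). *)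
Definition T (m : nat) (q : R) : R := Series (fun j : nat => powm (j + m + 1) q).

Definition S (m : nat) (q : R) : R := sum_n_m (fun k : nat => powm k q) 1 m.

(* Main.v *)
Require Import Defs.
From Stdlib Require Import Reals Lra Lia Psatz.
From Coquelicot Require Import Coquelicot.
Open Scope R_scope.

Lemma Rp1 y : Rpower 1 y = 1.
Proof. unfold Rpower. rewrite ln_1, Rmult_0_r. apply exp_0. Qed.

Lemma Rp_pos x y : 0 < Rpower x y.
Proof. unfold Rpower. apply exp_pos. Qed.

Lemma key q a b c d : 0 <= q -> 0 < a -> 0 < b -> 0 < c -> 0 < d ->
  c * b <= a * d -> Rpower c q * Rpower d (-q) <= Rpower a q * Rpower b (-q).
Proof.
  intros Hq Ha Hb Hc Hd H. unfold Rpower. rewrite <- !exp_plus.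
  assert (H1 : ln (c*b) <= ln (a*d)) by (apply ln_le; nra).
  rewrite !ln_mult in H1 by lra.
  assert (H2 : q * ln c + - q * ln d <= q * ln a + - q * ln b) by nra.
  destruct H2 as [H2|H2]; [left; now apply exp_increasing | right; now rewrite H2].
Qed.

Lemma anti q x y : 0 <= q -> 0 < x -> x <= y -> Rpower y (-q) <= Rpower x (-q).
Proof.
  intros. assert (H' := key q 1 x 1 y H ltac:(lra) H0 ltac:(lra) ltac:(lra) ltac:(lra)).
  rewrite !Rp1 in H'. lra.
Qed.

Lemma tel q x : 1 < q -> 1 <= x ->
  (q-1) * Rpower (x+1) (-q) <= Rpower x (1-q) - Rpower (x+1) (1-q).
Proof.
  intros Hq Hx.
  destruct (MVT_cor2 (fun y => Rpower y (1-q)) (fun y => (1-q) * Rpower y (1-q-1)) x (x+1))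
    as [c [Hc1 Hc2]]; [lra| |].
  - intros c Hc. apply derivable_pt_lim_power. lra.
  - replace (1-q-1) with (-q) in Hc1 by ring.
    assert (Rpower (x+1) (-q) <= Rpower c (-q)) by (apply anti; lra).
    nra.
Qed.

Definition fZ q (r : nat) := powm (r + 1) q.

Lemma zeta_bound q N : 1 < q -> (q-1) * sum_n (fZ q) N <= q - Rpower (INR N + 1) (1-q).
Proof.
  intros Hq. induction N.
  - rewrite sum_O. unfold fZ, powm. simpl. rewrite !Rplus_0_l, !Rp1. lra.
  - rewrite sum_Sn. change (plus ?x ?y) with (x + y).
    unfold fZ at 2, powm. rewrite plus_INR, S_INR. simpl (INR 1). rewrite ?INR_0.
    assert (H := tel q (INR N + 1) Hq). assert (0 <= INR N) by apply pos_INR.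
    specialize (H ltac:(lra)). nra.
Qed.

Lemma ex_zeta q : 1 < q -> ex_series (fZ q).
Proof.
  intros Hq. destruct (ex_finite_lim_seq_incr (sum_n (fZ q)) (q/(q-1))) as [l Hl].
  - intros n. rewrite sum_Sn. change (plus ?x ?y) with (x + y).
    assert (0 < fZ q (Datatypes.S n)) by apply Rp_pos. lra.
  - intros n. assert (H := zeta_bound q n Hq). assert (0 < Rpower (INR n + 1) (1 - q)) by apply Rp_pos.
    apply Rmult_le_reg_l with (q-1). lra. field_simplify. lra. lra.
  - exists l. exact Hl.
Qed.

Lemma ex_shift q c : 1 < q -> (1 <= c)%nat -> ex_series (fun j => powm (j + c) q).
Proof.
  intros Hq Hc. apply (@ex_series_le R_AbsRing R_CompleteNormedModule _ (fZ q)); [|now apply ex_zeta].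
  intros n. change norm with Rabs. simpl. unfold fZ, powm.
  rewrite Rabs_pos_eq by (left; apply Rp_pos). apply anti. lra.
  rewrite plus_INR; simpl; pose proof (pos_INR n); lra.
  rewrite !plus_INR. apply le_INR in Hc. simpl in Hc |- *. lra.
Qed.

Lemma ex_tail q c : 1 < q -> ex_series (fun j => powm (j + c + 1) q).
Proof.
  intros Hq. apply ex_series_ext with (fun j => powm (j + (c+1)) q).
  intros; unfold powm; rewrite Nat.add_assoc; reflexivity. apply ex_shift; [lra|lia].
Qed.

Lemma series_nonneg f : ex_series f -> (forall n, 0 <= f n) -> 0 <= Series f.
Proof.
  intros He Hf. assert (H := Series_correct f He).
  assert (Hl := is_lim_seq_le (fun _ => 0) (sum_n f) 0 (Series f)).
  apply Hl. 2: apply is_lim_seq_const. 2: exact H.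
  induction n. rewrite sum_O; apply Hf. rewrite sum_Sn. change (plus ?x ?y) with (x+y).
  specialize (Hf (Datatypes.S n)). lra.
Qed.

Lemma zeta_split q m : 1 < q -> Series (fZ q) = S m q + T m q.
Proof.
  intros Hq. induction m.
  - unfold S, T. rewrite sum_n_m_zero by lia. change (zero (G:=R_AbelianMonoid)) with 0.
    rewrite Rplus_0_l. apply Series_ext. intros; unfold fZ; now rewrite Nat.add_0_r.
  - rewrite IHm. unfold S, T. rewrite sum_n_Sm by lia. change (plus ?x ?y) with (x+y).
    rewrite (Series_incr_1 (fun j => powm (j + m + 1) q)) by (apply ex_tail; lra).
    replace (0 + m + 1)%nat with (Datatypes.S m) by lia.
    rewrite (Series_ext (fun k => powm (Datatypes.S k + m + 1) q) (fun j => powm (j + Datatypes.S m + 1) q)).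
    ring. intros; f_equal; lia.
Qed.

Lemma lim_block f c L : (1 <= c)%nat -> is_series f L ->
  is_lim_seq (fun R => sum_n_m f 1 (c*R)) (L - f 0%nat).
Proof.
  intros Hc H.
  assert (H1 : is_lim_seq (fun R => sum_n f (c*R)) L).
  { apply (is_lim_seq_subseq (sum_n f) L (fun R => c*R)%nat).
    apply eventually_subseq; intros; lia. exact H. }
  apply is_lim_seq_ext with (fun R => sum_n f (c*R) - f 0%nat).
  intros R. pose proof (@sum_n_m_sum_n R_AbelianGroup f 0 (c*R) ltac:(lia)) as E. rewrite sum_O in E. symmetry; exact E.
  apply is_lim_seq_minus'. exact H1. apply is_lim_seq_const.
Qed.

Section Core.
Variables (q : R) (m : nat).
Hypothesis Hq : 1 < q.
Hypothesis Hm : (1 <= m)%nat.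

Let n := Datatypes.S m.
Let fN j := powm (j + m + 1) q.
Let fM j := powm (j + m) q.

Lemma INRpos k : (1 <= k)%nat -> 0 < INR k.
Proof. intros; apply lt_0_INR; lia. Qed.

Lemma block R k : (k <= m)%nat ->
  Rpower (INR m) q * sum_n_m fM (Datatypes.S (m*R)) (m*R+k)
  <= Rpower (INR n) q * sum_n_m fN (Datatypes.S (n*R)) (n*R+k).
Proof.
  induction k; intros Hk.
  - rewrite !sum_n_m_zero by lia. change (zero (G:=R_AbelianMonoid)) with 0. lra.
  - rewrite !Nat.add_succ_r, !sum_n_Sm by lia. change (plus ?x ?y) with (x+y).
    rewrite !Rmult_plus_distr_l. specialize (IHk ltac:(lia)).
    assert (Rpower (INR m) q * fM (Datatypes.S (m * R + k)) <= Rpower (INR n) q * fN (Datatypes.S (n * R + k))).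
    { unfold fM, fN, powm. apply key. lra. apply INRpos; unfold n; lia.
      apply INRpos; lia. apply INRpos; lia. apply INRpos; lia.
      unfold n. rewrite !plus_INR, !S_INR, !plus_INR, !mult_INR, !S_INR. simpl (INR 1). rewrite ?INR_0.
      pose proof (pos_INR R); pose proof (pos_INR k); pose proof (pos_INR m). rewrite ?INR_0 in *. nra. }
    lra.
Qed.

Definition u R := Rpower (INR n) q * sum_n_m fN 1 (n*R)
   - Rpower (INR m) q * sum_n_m fM 1 (m*R) - sum_n_m (fZ q) 1 R.

Lemma u_nonneg r : 0 <= u r.
Proof.
  induction r.
  - unfold u. rewrite !Nat.mul_0_r, !sum_n_m_zero by lia.
    change (zero (G:=R_AbelianMonoid)) with 0. lra.
  - unfold u in *.
    replace (n * Datatypes.S r)%nat with (Datatypes.S (n*r+m)) by (unfold n; lia).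
    replace (m * Datatypes.S r)%nat with (m*r+m)%nat by lia.
    rewrite sum_n_Sm by lia. rewrite (sum_n_Sm (fZ q)) by lia.
    rewrite (sum_n_m_Chasles fN 1 (n*r) (n*r+m)) by lia.
    rewrite (sum_n_m_Chasles fM 1 (m*r) (m*r+m)) by lia.
    change (plus ?x ?y) with (x+y). change (plus ?x ?y) with (x+y). change (plus ?x ?y) with (x+y).
    assert (HB := block r m (le_n m)).
    assert (fZ q (Datatypes.S r) <= Rpower (INR n) q * fN (Datatypes.S (n * r + m))).
    { assert (H := key q (INR n) (INR (Datatypes.S (n * r + m) + m + 1)) 1 (INR (Datatypes.S r + 1))
        ltac:(lra) ltac:(apply INRpos; unfold n; lia) ltac:(apply INRpos; lia) ltac:(lra) ltac:(apply INRpos; lia)).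
      rewrite Rp1 in H. unfold fZ, fN, powm. rewrite <- (Rmult_1_l (Rpower (INR (Datatypes.S r + 1)) (-q))). apply H.
      unfold n. rewrite !plus_INR, !S_INR, !plus_INR, !mult_INR, !S_INR. simpl (INR 1). rewrite ?INR_0.
      pose proof (pos_INR r); pose proof (pos_INR m). nra. }
    nra.
Qed.

Lemma core : (Rpower (INR n) q - Rpower (INR m) q - 1) * T m q >= S m q.
Proof.
  assert (eN : ex_series fN) by (apply ex_tail; lra).
  assert (eM : ex_series fM) by (apply ex_shift; [lra|lia]).
  assert (eZ : ex_series (fZ q)) by (apply ex_zeta; lra).
  assert (LN := lim_block fN n _ ltac:(unfold n; lia) (Series_correct _ eN)).
  assert (LM := lim_block fM m _ Hm (Series_correct _ eM)).
  assert (LZ := lim_block (fZ q) 1 _ (le_n 1) (Series_correct _ eZ)).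
  assert (LN' := is_lim_seq_scal_l _ (Rpower (INR n) q) _ LN).
  assert (LM' := is_lim_seq_scal_l _ (Rpower (INR m) q) _ LM).
  cbn -[INR Rpower Series] in LN', LM'.
  assert (LZ' : is_lim_seq (fun R => sum_n_m (fZ q) 1 R) (Series (fZ q) - fZ q 0%nat)).
  { eapply is_lim_seq_ext; [|exact LZ]. intros; simpl; now rewrite Nat.add_0_r. }
  assert (L := is_lim_seq_minus' _ _ _ _ (is_lim_seq_minus' _ _ _ _ LN' LM') LZ').
  assert (H := is_lim_seq_le (fun _ => 0) u 0 _ u_nonneg (is_lim_seq_const 0) L).
  cbn -[INR Rpower Series] in H.
  rewrite (Series_incr_1 fM eM) in H.
  rewrite (Series_ext (fun k => fM (Datatypes.S k)) fN) in H
    by (intros; unfold fM, fN; f_equal; lia).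
  rewrite (zeta_split q m Hq) in H.
  assert (E1 : fZ q 0 = 1) by (unfold fZ, powm; simpl; try rewrite Rplus_0_l; apply Rp1).
  assert (E2 : Rpower (INR n) q * fN 0 = 1).
  { unfold fN, powm. replace (0 + m + 1)%nat with n by (unfold n; lia).
    rewrite <- Rpower_plus, Rplus_opp_r. apply Rpower_O. apply INRpos; unfold n; lia. }
  assert (T m q = Series fN) by reflexivity.
  rewrite E1 in H. nra.
Qed.
End Core.

Theorem lemma3p2 (p a : R) (n : nat) :
  1 < p -> 0 <= a -> a < p - 1 -> (2 <= n)%nat ->
  (Rpower (INR n) p - Rpower (INR n - 1) p - Rpower (INR n) a) * T (n - 1) (p - a)
  >= Rpower (INR n) a * S (n - 1) (p - a).
Proof.
  intros Hp Ha Hap Hn.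
  destruct n as [|m]; [lia|].
  replace (Datatypes.S m - 1)%nat with m by lia.
  assert (Hm : (1 <= m)%nat) by lia.
  assert (C := core (p - a) m ltac:(lra) Hm).
  set (q := p - a) in *.
  rewrite S_INR. rewrite S_INR in C. replace (INR m + 1 - 1) with (INR m) by ring.
  assert (Hm0 : 0 < INR m) by (apply lt_0_INR; lia).
  replace p with (a + q) by (unfold q; ring).
  rewrite !Rpower_plus.
  assert (H1 : Rpower (INR m) a <= Rpower (INR m + 1) a) by (apply Rle_Rpower_l; lra).
  assert (T0 : 0 <= T m q).
  { apply series_nonneg. apply ex_tail. unfold q; lra. intros; left; apply Rp_pos. }
  assert (P1 := Rp_pos (INR m + 1) a). assert (P2 := Rp_pos (INR m) q).
  assert (K : Rpower (INR m) a * Rpower (INR m) q * T m q <= Rpower (INR m + 1) a * Rpower (INR m) q * T m q).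
  { apply Rmult_le_compat_r; auto. apply Rmult_le_compat_r; lra. }
  assert (K2 : Rpower (INR m + 1) a * ((Rpower (INR m + 1) q - Rpower (INR m) q - 1) * T m q) >= Rpower (INR m + 1) a * S m q).
  { apply Rle_ge, Rmult_le_compat_l; lra. }
  nra.
Qed.
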